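(* Let $N,T\ge 1$, let $p_1,\dots,p_N\in[0,1]$, and let $\mathbf U=(U_1,\dots,U_N)$ have independent coordinates $U_i\sim\mathrm{Ber}(p_i)$. Let $G\in\{0,1\}^{T\times N}$ be a fixed testing matrix, with test results $Y_t=1-\prod_{i=1}^N(1-G_{ti}U_i)$ for $t=1,\dots,T$, and DND estimate $\widehat U_i=\prod_{t=1}^T Y_t^{G_{ti}}$ (with $0^0=1$). Define the expected number of errors $$\mathcal E(G)\triangleq\mathbb E\Big[\sum_{i=1}^N \mathbb 1\{\widehat U_i\neq U_i\}\Big].$$ Then $\mathcal E(G)\ge \mathcal E_{LB}(G)$, where $$\mathcal E_{LB}(G)\triangleq\sum_{i=1}^N(1-p_i)\prod_{t=1}^T\Big(1-G_{ti}\prod_{j=1,\,j\neq i}^N(1-G_{tj}p_j)\Big).$$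
   Context: Group testing setup: $N$ individuals, individual $i$ infected ($U_i=1$) independently with known prior probability $p_i$; $G_{ti}=1$ means individual $i$ participates in test $t$; a test is positive iff it contains an infected participant. The Definite Non-Defectives (DND) decoder declares individual $i$ healthy iff $i$ participates in at least one negative test, and infected otherwise. *)

(* Defs.v *)
From mathcomp Require Import all_boot all_order all_algebra.
Set Implicit Arguments. Unset Strict Implicit. Unset Printing Implicit Defensive.
Import Order.TTheory GRing.Theory Num.Theory.
Local Open Scope ring_scope.

Definition prob_U (R : realFieldType) (N : nat) (p : 'I_N -> R)
  (u : {ffun 'I_N -> bool}) : R :=
  \prod_(i < N) (if u i then p i else 1 - p i).

Definition b2R (R : realFieldType) (b : bool) : R := if b then 1 else 0.

Definition test_result (R : realFieldType) (T N : nat) (G : 'M[bool]_(T, N))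
  (u : {ffun 'I_N -> bool}) (t : 'I_T) : R :=
  1 - \prod_(i < N) (1 - b2R R (G t i) * b2R R (u i)).

Definition dnd_estimate (R : realFieldType) (T N : nat) (G : 'M[bool]_(T, N))
  (u : {ffun 'I_N -> bool}) (i : 'I_N) : R :=
  \prod_(t < T) (test_result R G u t) ^+ (nat_of_bool (G t i)).

Definition expected_errors (R : realFieldType) (T N : nat) (p : 'I_N -> R)
  (G : 'M[bool]_(T, N)) : R :=
  \sum_(u : {ffun 'I_N -> bool})
     prob_U p u * \sum_(i < N) b2R R (dnd_estimate R G u i != b2R R (u i)).

Definition error_lower_bound (R : realFieldType) (T N : nat) (p : 'I_N -> R)
  (G : 'M[bool]_(T, N)) : R :=
  \sum_(i < N) (1 - p i) *
    \prod_(t < T) (1 - b2R R (G t i) *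
                        \prod_(j < N | j != i) (1 - b2R R (G t j) * p j)).

(* Main.v *)
Require Import Defs.
From mathcomp Require Import all_boot all_order all_algebra.
From mathcomp Require Import ring lra.
Set Implicit Arguments. Unset Strict Implicit. Unset Printing Implicit Defensive.
Import Order.TTheory GRing.Theory Num.Theory.
Local Open Scope ring_scope.

Import Order.TTheory GRing.Theory Num.Theory.
Section H.
Variable R : realFieldType.

Definition Ex n (q : 'I_n -> R) (f : {ffun 'I_n -> bool} -> R) : R :=
  \sum_u prob_U q u * f u.

Definition fcons n (b : bool) (v : {ffun 'I_n -> bool}) : {ffun 'I_n.+1 -> bool} :=
  [ffun i => if unlift ord0 i is Some j then v j else b].
Definition ftail n (u : {ffun 'I_n.+1 -> bool}) : {ffun 'I_n -> bool} :=
  [ffun j => u (lift ord0 j)].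

Lemma fcons0 n b (v : {ffun 'I_n -> bool}) : fcons b v ord0 = b.
Proof. by rewrite /fcons ffunE unlift_none. Qed.
Lemma fconsS n b (v : {ffun 'I_n -> bool}) j : fcons b v (lift ord0 j) = v j.
Proof. by rewrite /fcons ffunE liftK. Qed.

Lemma Ex_rec n (q : 'I_n.+1 -> R) f :
  Ex q f = q ord0 * Ex (fun j => q (lift ord0 j)) (fun v => f (fcons true v))
         + (1 - q ord0) * Ex (fun j => q (lift ord0 j)) (fun v => f (fcons false v)).
Proof.
rewrite /Ex (reindex (fun bv : bool * {ffun 'I_n -> bool} => fcons bv.1 bv.2)) /=.
  rewrite -(pair_bigA _ (fun b v => prob_U q (fcons b v) * f (fcons b v))) /=.
  rewrite big_bool /= !big_distrr /=.
  congr (_ + _); apply: eq_bigr => v _; rewrite /prob_U big_ord_recl fcons0 mulrA;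
  congr (_ * _ * _); apply: eq_bigr => j _; by rewrite fconsS.
exists (fun u : {ffun 'I_n.+1 -> bool} => (u ord0, ftail u)) => [[b v] _ | u _] /=.
  by rewrite fcons0; congr pair; apply/ffunP => j; rewrite ffunE fconsS.
apply/ffunP => i; rewrite ffunE; case: unliftP => [j ->|->] //.
by rewrite ffunE.
Qed.

Lemma prob_U_ge0 n (q : 'I_n -> R) u : (forall i, 0 <= q i <= 1) -> 0 <= prob_U q u.
Proof.
move=> hq; apply: prodr_ge0 => i _; case: (u i); case/andP: (hq i) => h0 h1 //.
by rewrite subr_ge0.
Qed.

Lemma Ex_le n (q : 'I_n -> R) f g : (forall i, 0 <= q i <= 1) ->
  (forall u, f u <= g u) -> Ex q f <= Ex q g.
Proof.
move=> hq hfg; apply: ler_sum => u _; apply: ler_wpM2l; [exact: prob_U_ge0|exact: hfg].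
Qed.

Lemma Ex_ge0 n (q : 'I_n -> R) f : (forall i, 0 <= q i <= 1) ->
  (forall u, 0 <= f u) -> 0 <= Ex q f.
Proof.
move=> hq hf; apply: sumr_ge0 => u _; apply: mulr_ge0; [exact: prob_U_ge0|exact: hf].
Qed.

Definition omono n (o : 'I_n -> bool) (f : {ffun 'I_n -> bool} -> R) :=
  forall u v : {ffun 'I_n -> bool}, (forall j, if o j then u j ==> v j else v j ==> u j) -> f u <= f v.

Lemma harris n (q : 'I_n -> R) (o : 'I_n -> bool) f g :
  (forall i, 0 <= q i <= 1) -> omono o f -> omono o g ->
  Ex q f * Ex q g <= Ex q (fun u => f u * g u).
Proof.
elim: n q o f g => [|n IH] q o f g hq hf hg.
  have E : forall h : {ffun 'I_0 -> bool} -> R, Ex q h = h [ffun i => false].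
    move=> h; rewrite /Ex (big_pred1 [ffun i => false]).
      by rewrite /prob_U big_ord0 mul1r.
    by move=> u /=; symmetry; apply/eqP/ffunP => -[].
  by rewrite !E.
rewrite !(Ex_rec q).
set q' := fun j => q (lift ord0 j).
have hq' : forall i, 0 <= q' i <= 1 by move=> i; exact: hq.
have hr : forall h b, omono o h -> omono (fun j => o (lift ord0 j)) (fun v => h (fcons b v)).
  move=> h b hh u v huv; apply: hh => j; case: (unliftP ord0 j) => [k ->|->].
    by rewrite !fconsS; exact: huv.
  by rewrite !fcons0; case: (o _); case: b.
have hm : forall h, omono o h ->
   0 <= (if o ord0 then 1 else -1) * (Ex q' (fun v => h (fcons true v)) - Ex q' (fun v => h (fcons false v))).
  move=> h hh; case ho: (o ord0).
    rewrite mul1r subr_ge0; apply: Ex_le => // v; apply: hh => j.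
    case: (unliftP ord0 j) => [k ->|->]; first by rewrite !fconsS; case: (o _); case: (v k).
    by rewrite !fcons0 ho.
  rewrite mulN1r oppr_ge0 subr_le0; apply: Ex_le => // v; apply: hh => j.
  case: (unliftP ord0 j) => [k ->|->]; first by rewrite !fconsS; case: (o _); case: (v k).
  by rewrite !fcons0 ho.
have h1 := IH q' _ _ _ hq' (hr f true hf) (hr g true hg).
have h0 := IH q' _ _ _ hq' (hr f false hf) (hr g false hg).
have mf := hm f hf; have mg := hm g hg.
set a1 := Ex q' _ in h1 mf. set b1 := Ex q' _ in h1 mg.
set a0 := Ex q' _ in h0 mf. set b0 := Ex q' _ in h0 mg.
set X1 := Ex q' _ in h1. set X0 := Ex q' _ in h0.
have [hq0 hq1] := andP (hq ord0).
have hab : 0 <= (a1 - a0) * (b1 - b0).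
  move: mf mg; case: (o ord0); rewrite ?mul1r ?mulN1r => mf mg.
    exact: mulr_ge0.
  by rewrite -mulrNN; apply: mulr_ge0.
have hq01 : 0 <= q ord0 * (1 - q ord0) by apply: mulr_ge0; rewrite ?subr_ge0.
have e1 := mulr_ge0 hq01 hab.
have e2 : q ord0 * (a1 * b1) <= q ord0 * X1 by exact: ler_wpM2l.
have e3 : (1 - q ord0) * (a0 * b0) <= (1 - q ord0) * X0 by apply: ler_wpM2l; rewrite ?subr_ge0.
apply: le_trans (lerD e2 e3); rewrite -subr_ge0.
set Q := q ord0.
have -> : Q * (a1 * b1) + (1 - Q) * (a0 * b0) - (Q * a1 + (1 - Q) * a0) * (Q * b1 + (1 - Q) * b0)
  = Q * (1 - Q) * ((a1 - a0) * (b1 - b0)) by ring.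
exact: e1.
Qed.


Lemma Ex_prodform n (q : 'I_n -> R) (phi : 'I_n -> bool -> R) :
  Ex q (fun u => \prod_i phi i (u i)) = \prod_i (q i * phi i true + (1 - q i) * phi i false).
Proof.
rewrite /Ex.
rewrite (eq_bigr (fun u : {ffun 'I_n -> bool} => \prod_i ((if u i then q i else 1 - q i) * phi i (u i)))); last by move=> u _; rewrite /prob_U big_split.
rewrite -(bigA_distr_bigA (fun i b => (if b then q i else 1 - q i) * phi i b)).
by apply: eq_bigr => i _; rewrite big_bool.
Qed.

Lemma Ex_1 n (q : 'I_n -> R) : Ex q (fun _ => 1) = 1.
Proof.
transitivity (Ex q (fun u => \prod_(i < n) (fun _ _ => 1 : R) i (u i))).
  by rewrite /Ex; apply: eq_bigr => u _; rewrite big1_eq.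
rewrite (Ex_prodform q (fun _ _ => 1)); apply: big1 => i _; rewrite !mulr1 subrKC //.
Qed.

Lemma Ex_1B n (q : 'I_n -> R) g : Ex q (fun u => 1 - g u) = 1 - Ex q g.
Proof.
rewrite /Ex; under eq_bigr do rewrite mulrBr mulr1.
have h := Ex_1 q; rewrite /Ex in h; rewrite (eq_bigr (fun u => prob_U q u)) in h; last by move=> u _; rewrite mulr1.
by rewrite sumrB h.
Qed.

Lemma omono_prod n (o : 'I_n -> bool) (I : Type) (s : seq I) F :
  (forall x, omono o (F x)) -> (forall x u, 0 <= F x u) ->
  omono o (fun u => \prod_(x <- s) F x u).
Proof.
move=> hm h0; elim: s => [|y s IH] u v huv; first by rewrite !big_nil.
rewrite !big_cons; apply: ler_pM; [exact: h0|exact: prodr_ge0|exact: hm|exact: IH].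
Qed.

Lemma harris_prod n (q : 'I_n -> R) o (I : Type) (s : seq I) F :
  (forall i, 0 <= q i <= 1) -> (forall x, omono o (F x)) -> (forall x u, 0 <= F x u) ->
  \prod_(x <- s) Ex q (F x) <= Ex q (fun u => \prod_(x <- s) F x u).
Proof.
move=> hq hm h0; elim: s => [|y s IH]; first by rewrite big_nil -[X in X <= _](Ex_1 q); apply: Ex_le => // u; rewrite big_nil.
rewrite big_cons; apply: le_trans (ler_wpM2l (Ex_ge0 _ _) IH) _ => //.
rewrite /Ex; under [X in _ <= X]eq_bigr do rewrite big_cons; rewrite -/(Ex _ _).
exact: (harris hq (hm y) (omono_prod s hm h0)).
Qed.

End H.

Lemma b2R_ge0 (R : realFieldType) b : 0 <= b2R R b.
Proof. by case: b; rewrite /b2R. Qed.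

Lemma exists_prod (R : realFieldType) (N : nat) (P : 'I_N -> bool) (a : 'I_N -> bool) :
  b2R R [exists j, P j && a j] =
  1 - \prod_j (if P j then 1 - b2R R (a j) else 1).
Proof.
case: existsP => [[j /andP[hp ha]] | hne].
  by rewrite (bigD1 j) //= hp ha /b2R subrr mul0r subr0.
rewrite big1 ?subrr // => j _; case hp: (P j) => //; case ha: (a j).
  by exfalso; apply: hne; exists j; rewrite hp ha.
by rewrite /b2R subr0.
Qed.

Theorem theorem1 (R : realFieldType) (N T : nat) (hN : (1 <= N)%N) (hT : (1 <= T)%N)
  (p : 'I_N -> R) (hp : forall i, 0 <= p i <= 1) (G : 'M[bool]_(T, N)) :
  error_lower_bound p G <= expected_errors p G.
Proof.
rewrite /expected_errors.
under eq_bigr do rewrite big_distrr.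
rewrite exchange_big /error_lower_bound; apply: ler_sum => i _.
rewrite -/(Ex p (fun u => b2R R (dnd_estimate R G u i != b2R R (u i)))).
pose F0 := fun u : {ffun 'I_N -> bool} => b2R R (~~ u i).
pose h := fun (t : 'I_T) (u : {ffun 'I_N -> bool}) =>
  if G t i then b2R R [exists j, ((j != i) && G t j) && u j] else 1.
pose o := fun j : 'I_N => j != i.
have mF0 : omono o F0.
  move=> u v /(_ i); rewrite /o eqxx /F0 /=.
  by case: (u i); case: (v i); rewrite /b2R.
have mh : forall t, omono o (h t).
  move=> t u v huv; rewrite /h; case: (G t i) => //.
  case: existsP => [[j /andP[/andP[hji hg] hu]]|_]; last exact: b2R_ge0.
  case: existsP => [_|hne]; first by [].
  exfalso; apply: hne; exists j; rewrite hji hg /=.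
  by have := huv j; rewrite /o hji hu.
have h0 : forall t u, 0 <= h t u.
  by move=> t u; rewrite /h; case: (G t i) => //; exact: b2R_ge0.
have step1 : Ex p (fun u => F0 u * \prod_(t < T) h t u) <=
             Ex p (fun u => b2R R (dnd_estimate R G u i != b2R R (u i))).
  apply: Ex_le => // u; rewrite /F0.
  case hui: (u i); first by rewrite /= /b2R mul0r; case: ifP.
  rewrite /= {1}/b2R mul1r.
  case: (boolP [forall t, G t i ==> [exists j, ((j != i) && G t j) && u j]]) => hall.
    have hd : dnd_estimate R G u i = 1.
      rewrite /dnd_estimate big1 // => t _.
      have := forallP hall t; case: (G t i) => //= /existsP [j /andP[/andP[_ hg] hu]].
      by rewrite expr1 /test_result (bigD1 j) //= hg hu {1 2}/b2R mulr1 subrr mul0r subr0.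
    rewrite hd big1; first by rewrite /b2R oner_eq0.
    move=> t _; rewrite /h; have := forallP hall t; case: (G t i) => //= ->.
    by [].
  have [t ht] : exists t, ~~ (G t i ==> [exists j, ((j != i) && G t j) && u j]).
    by apply/existsP; rewrite -negb_forall.
  rewrite (bigD1 t) //= /h; move: ht; case: (G t i) => //= /negbTE ->.
  by rewrite /b2R mul0r; case: ifP.
apply: le_trans step1.
have step2 := harris hp mF0 (omono_prod (index_enum 'I_T) mh h0).
have step3 := @harris_prod R N p o _ (index_enum 'I_T) h hp mh h0.
apply: le_trans step2; apply: le_trans (ler_wpM2l (Ex_ge0 hp (fun u => b2R_ge0 R _)) step3).
have -> : Ex p F0 = 1 - p i.
  transitivity (Ex p (fun u => \prod_(j < N) (fun j b => if j == i then b2R R (~~ b) else 1) j (u j))).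
    rewrite /Ex; apply: eq_bigr => u _; rewrite (bigD1 i) //= eqxx big1 ?mulr1 //.
    by move=> j /negbTE ->.
  rewrite (Ex_prodform p (fun j b => if j == i then b2R R (~~ b) else 1)).
  rewrite (bigD1 i) //= eqxx big1 ?mulr1; first by rewrite /b2R /=; ring.
  by move=> j /negbTE ->; rewrite !mulr1 subrKC.
apply: ler_wpM2l; first by case/andP: (hp i) => _ h1; rewrite subr_ge0.
rewrite le_eqVlt; apply/orP; left; apply/eqP; apply: eq_bigr => t _; symmetry.
rewrite /h; case: (G t i); last first.
  by rewrite /b2R mul0r subr0 Ex_1.
rewrite /b2R mul1r.
transitivity (Ex p (fun u => 1 - \prod_(j < N) (fun j b => if j != i then 1 - b2R R (G t j && b) else 1) j (u j))).
  rewrite /Ex; apply: eq_bigr => u _; congr (_ * _).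
  rewrite -(exists_prod R (fun j => (j != i)) (fun j => G t j && u j)).
  by congr (b2R R _); apply: eq_existsb => j; rewrite andbA.
rewrite Ex_1B (Ex_prodform p (fun j b => if j != i then 1 - b2R R (G t j && b) else 1)).
congr (1 - _); rewrite [RHS]big_mkcond; apply: eq_bigr => j _.
case: (j != i); last by rewrite !mulr1 subrKC.
by rewrite andbT andbF /b2R; case: (G t j); rewrite ?mul1r ?mul0r ?subr0 ?subrr ?mulr0 ?addr0 ?mulr1; [ring|rewrite subrKC].
Qed.
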